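(* Let $X$ be a finite set with $|X|=n$, $0\notin X$, $W=X\cup\{0\}$. Let $\mathfrak{V}$ be a $\big(\binom{n}{2}_{\,n-2}\ \binom{n}{3}_{\,3}\big)$-configuration whose point set is $\mathcal{P}_2(X)$, and let $\mathfrak{M}$ be the structure with point set $\mathcal{P}_2(W)$ whose lines are the lines of $\mathfrak{V}$ together with all sets $\{\{0,x\},\{0,y\},\{x,y\}\}$ for distinct $x,y\in X$. Let $H$ be a hyperplane of $\mathfrak{M}$, and on $X$ define the equivalence relation $x\sim y$ iff $x=y$, or $x\neq y$ and $\{x,y\}\in H$. If $\mathfrak{a}\neq\mathfrak{b}$ are equivalence classes of $\sim$, then $\{0,x\}\in H$ for all $x\in\mathfrak{a}$, or $\{0,x\}\in H$ for all $x\in\mathfrak{b}$.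
   Context: $\mathcal{P}_2(Y)$ denotes the set of $2$-element subsets of $Y$. A $(v_r\ b_k)$-configuration is a partial linear space with $v$ points and $b$ lines, each point on exactly $r$ lines and each line containing exactly $k$ points. A subspace is a set of points containing every line that meets it in at least two points; a hyperplane is a proper subspace meeting every line. *)

(* Defs.v *)
From mathcomp Require Import all_boot.
Set Implicit Arguments. Unset Strict Implicit. Unset Printing Implicit Defensive.

Definition P2 (T : finType) (Y : {set T}) : {set {set T}} :=
  [set A : {set T} | (A \subset Y) && (#|A| == 2)].

(* (v_r b_k)-configuration: partial linear space with v points and b lines,
   each point on exactly r lines and each line with exactly k points. *)
Definition is_configuration (T : finType) (P : {set T}) (L : {set {set T}})
    (v r b k : nat) : Prop :=
  [/\ #|P| = v, #|L| = b,
      (forall l, l \in L -> l \subset P /\ #|l| = k),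
      (forall p, p \in P -> #|[set l in L | p \in l]| = r) &
      (forall p q, p \in P -> q \in P -> p != q ->
         #|[set l in L | (p \in l) && (q \in l)]| <= 1)].

Definition subspace (T : finType) (P : {set T}) (L : {set {set T}})
    (S : {set T}) : Prop :=
  S \subset P /\ (forall l, l \in L -> 2 <= #|l :&: S| -> l \subset S).

Definition hyperplane (T : finType) (P : {set T}) (L : {set {set T}})
    (S : {set T}) : Prop :=
  [/\ subspace P L S, S != P & (forall l, l \in L -> l :&: S != set0)].

(* W = X ∪ {0} is modelled as option X, with 0 = None and x = Some x. *)
Definition embed_pt (X : finType) (p : {set X}) : {set option X} := Some @: p.

Definition M_lines (X : finType) (LV : {set {set {set X}}})
    : {set {set {set option X}}} :=
  [set [set embed_pt p | p : {set X} in l] | l : {set {set X}} in LV] :|: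
  [set [set [set None; Some x]; [set None; Some y]; [set Some x; Some y]]
     | x : X, y : X in [set y0 | y0 != x]].

Definition simH (X : finType) (H : {set {set option X}}) (x y : X) : bool :=
  (x == y) || ((x != y) && ([set Some x; Some y] \in H)).

Definition is_class (X : finType) (H : {set {set option X}}) (a : {set X}) : Prop :=
  exists x : X, a = [set y | simH H x y].

(* Main.v *)
Require Import Defs.
From mathcomp Require Import all_boot.
Set Implicit Arguments. Unset Strict Implicit. Unset Printing Implicit Defensive.

Section Aux.
Variable X : finType.
Variable LV : {set {set {set X}}}.
Variable H : {set {set option X}}.
Hypothesis hH : hyperplane (P2 [set: option X]) (M_lines LV) H.

Definition Tri (x y : X) : {set {set option X}} :=
  [set [set None; Some x]; [set None; Some y]; [set Some x; Some y]].

Lemma tri_in x y : x != y -> Tri x y \in M_lines LV.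
Proof.
move=> xy; rewrite /M_lines inE; apply/orP; right.
by apply/imset2P; exists x y => //; rewrite inE eq_sym.
Qed.

Lemma line_two l p q r : l \in M_lines LV -> p \in l -> q \in l -> p != q ->
  p \in H -> q \in H -> r \in l -> r \in H.
Proof.
case: hH => [[_ hs] _ _] hl pl ql pq pH qH rl.
have : l \subset H.
  apply: hs => //.
  have -> : 2 = #|[set p; q]| by rewrite cards2 pq.
  by apply: subset_leq_card; apply/subsetP => z; rewrite !inE => /orP[]/eqP->;
     rewrite ?pl ?ql ?pH ?qH.
by move/subsetP; apply.
Qed.

Lemma line_meet l : l \in M_lines LV -> exists2 p, p \in l & p \in H.
Proof.
case: hH => _ _ hm hl; have := hm l hl; case/set0Pn => p; rewrite inE => /andP[].
by exists p.
Qed.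

Lemma neq1 x y : x != y -> [set None; Some x] != [set None; Some y] :> {set option X}.
Proof.
move=> xy; apply/eqP => /setP /(_ (Some x)); rewrite !inE eqxx orbT.
by move=> /esym /orP[] // /eqP [] /eqP; rewrite (negbTE xy).
Qed.

Lemma neq2 x y : [set None; Some x] != [set Some x; Some y] :> {set option X}.
Proof. by apply/eqP => /setP /(_ None); rewrite !inE. Qed.

Lemma neq3 x y : [set None; Some y] != [set Some x; Some y] :> {set option X}.
Proof. by apply/eqP => /setP /(_ None); rewrite !inE. Qed.

Lemma tri_cases x y : x != y ->
  let A := [set None; Some x] \in H in
  let B := [set None; Some y] \in H in
  let C := [set Some x; Some y] \in H in
  [/\ [|| A, B | C], (A -> B -> C), (A -> C -> B) & (B -> C -> A)].
Proof.
move=> xy A B C; rewrite /A /B /C; have hl := tri_in xy.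
have i1 : [set None; Some x] \in Tri x y by rewrite !inE eqxx.
have i2 : [set None; Some y] \in Tri x y by rewrite !inE eqxx orbT.
have i3 : [set Some x; Some y] \in Tri x y by rewrite !inE eqxx !orbT.
split.
- case: (line_meet hl) => p; rewrite !inE => /orP[/orP[]|] /eqP -> ->;
  by rewrite ?orbT.
- by move=> a b; apply: (line_two hl i1 i2 (neq1 xy)).
- by move=> a c; apply: (line_two hl i1 i3 (neq2 x y)).
- by move=> b c; apply: (line_two hl i2 i3 (neq3 x y)).
Qed.

Lemma simH_sym x y : simH H x y -> simH H y x.
Proof.
rewrite /simH => /orP[/eqP->|/andP[xy h]]; first by rewrite eqxx.
by rewrite eq_sym xy setUC h orbT.
Qed.

Lemma simH_trans x y z : simH H x y -> simH H y z -> simH H x z.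
Proof.
rewrite /simH => /orP[/eqP->//|/andP[xy hxy]] /orP[/eqP<-|/andP[yz hyz]];
  first by rewrite xy hxy orbT.
case: (eqVneq x z) => // xz /=.
have [c1 c2 c3 c4] := tri_cases xy.
have [d1 d2 d3 d4] := tri_cases yz.
have [e1 e2 e3 e4] := tri_cases xz.
case Hy : ([set None; Some y] \in H).
  have Hx := c4 Hy hxy; have Hz := d3 Hy hyz.
  exact: e2.
case Hx : ([set None; Some x] \in H).
  by rewrite (c3 Hx hxy) in Hy.
case Hz : ([set None; Some z] \in H).
  by rewrite (d4 Hz hyz) in Hy.
by move: e1; rewrite Hx Hz.
Qed.

End Aux.

Theorem lemma3p4 (X : finType) (n : nat) (hn : #|X| = n)
    (LV : {set {set {set X}}})
    (hV : is_configuration (P2 [set: X]) LV 'C(n, 2) (n - 2) 'C(n, 3) 3)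
    (H : {set {set option X}})
    (hH : hyperplane (P2 [set: option X]) (M_lines LV) H)
    (a b : {set X}) (ha : is_class H a) (hb : is_class H b) (hab : a != b) :
  (forall x, x \in a -> [set None; Some x] \in H) \/
  (forall x, x \in b -> [set None; Some x] \in H).
Proof.
have [/forall_inP Ha|/forall_inPn [x xa Hx]] :=
  boolP [forall x in a, [set None; Some x] \in H]; first by left.
have [/forall_inP Hb|/forall_inPn [y yb Hy]] :=
  boolP [forall x in b, [set None; Some x] \in H]; first by right.
exfalso; move: hab; case: ha => x0 ea; case: hb => y0 eb.
move: xa yb; rewrite ea eb !inE => sx sy.
have sxy : simH H x y.
  rewrite /simH; case: (eqVneq x y) => //= xy.
  have [c1 _ _ _] := tri_cases hH xy.
  by move: c1; rewrite (negbTE Hx) (negbTE Hy).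
have s0 : simH H x0 y0.
  apply: (simH_trans hH sx); apply: (simH_trans hH sxy).
  exact: simH_sym sy.
rewrite -ea -eb => /negP; apply; apply/eqP/setP => z; rewrite ea eb !inE.
apply/idP/idP => h.
- exact: (simH_trans hH (simH_sym s0) h).
- exact: (simH_trans hH s0 h).
Qed.
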